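(* Let $n\in\mathbb{N}$ and let $\frac{a}{cn}$ and $\frac{b}{d}$ be positive rationals with $a,b,c,d\in\mathbb{N}$ and $|ad-bcn|=1$. Then every real $\alpha$ with $\min\{\frac{a}{cn},\frac{b}{d}\}\le\alpha\le\max\{\frac{a}{cn},\frac{b}{d}\}$ is not an infinite loop mod $n$.
   Context: For $\alpha$ with continued fraction $[a_0;a_1,\ldots]$ and convergent denominators $q_{-1}=0,q_0=1,q_k=a_kq_{k-1}+q_{k-2}$, the semi-convergent denominators are $mq_k+q_{k-1}$, $0\le m\le a_{k+1}$. A real $\alpha>0$ is an \emph{infinite loop mod $n$} if none of its semi-convergent denominators is divisible by $n$, except $q_{-1}=0$. For rational $\alpha$, both finite continued fraction expansions are considered and each is regarded as ending with a partial quotient equal to $\infty$, so that after the last convergent $p_k/q_k$ all semi-convergents $(mp_k+p_{k-1})/(mq_k+q_{k-1})$, $m\ge0$, are included. *)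

(* Defs.v *)
From Stdlib Require Import Reals Lia ZArith Arith.
Open Scope R_scope.

(* A sequence of partial quotients is a function  a : nat -> nat  with
   a 0 = a_0 and a i = a_i; only finitely many are used for a finite
   expansion.  (a_0 is a natural number since alpha > 0.) *)

(* (q_{k-1}, q_k) with q_{-1} = 0, q_0 = 1, q_k = a_k q_{k-1} + q_{k-2}. *)
Fixpoint cf_qpair (a : nat -> nat) (k : nat) : nat * nat :=
  match k with
  | O => (0%nat, 1%nat)
  | S k' => let '(x, y) := cf_qpair a k' in (y, (a (S k') * y + x)%nat)
  end.

(* (p_{k-1}, p_k) with p_{-1} = 1, p_0 = a_0, p_k = a_k p_{k-1} + p_{k-2}. *)
Fixpoint cf_ppair (a : nat -> nat) (k : nat) : nat * nat :=
  match k with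
  | O => (1%nat, a 0%nat)
  | S k' => let '(x, y) := cf_ppair a k' in (y, (a (S k') * y + x)%nat)
  end.

Definition cf_q (a : nat -> nat) (k : nat) : nat := snd (cf_qpair a k).
Definition cf_qprev (a : nat -> nat) (k : nat) : nat := fst (cf_qpair a k).
Definition cf_p (a : nat -> nat) (k : nat) : nat := snd (cf_ppair a k).

Definition cf_conv (a : nat -> nat) (k : nat) : R :=
  INR (cf_p a k) / INR (cf_q a k).

(* [is_cf_expansion alpha a len]: the partial quotients a form a continued
   fraction expansion of alpha.
   - len = None : infinite expansion [a_0; a_1, a_2, ...], a_i >= 1 for
     i >= 1, whose convergents converge to alpha;
   - len = Some K : finite expansion [a_0; a_1, ..., a_K], a_i >= 1 for
     1 <= i <= K, whose value p_K/q_K equals alpha (regarded as followed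
     by a partial quotient a_{K+1} = infinity). *)
Definition is_cf_expansion (alpha : R) (a : nat -> nat) (len : option nat)
  : Prop :=
  match len with
  | None => (forall i, (0 < i)%nat -> (0 < a i)%nat) /\
            Un_cv (cf_conv a) alpha
  | Some K => (forall i, (0 < i <= K)%nat -> (0 < a i)%nat) /\
              cf_conv a K = alpha
  end.

(* Admissible indices (k, m) of semi-convergent denominators
   m q_k + q_{k-1}, 0 <= m <= a_{k+1}; for a finite expansion of length K
   the partial quotient a_{K+1} is infinity, so all m >= 0 are allowed
   for k = K, and no index k > K occurs. *)
Definition semiconv_index (a : nat -> nat) (len : option nat) (k m : nat)
  : Prop :=
  match len with
  | None => (m <= a (S k))%nat
  | Some K => ((k < K)%nat /\ (m <= a (S k))%nat) \/ k = K
  end.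

Definition semiconv_den (a : nat -> nat) (k m : nat) : nat :=
  (m * cf_q a k + cf_qprev a k)%nat.

(* alpha > 0 is an infinite loop mod n if, for every continued fraction
   expansion of alpha (both finite ones if alpha is rational), no
   semi-convergent denominator is divisible by n, except
   q_{-1} = 0 (the index k = 0, m = 0). *)
Definition infinite_loop_mod (n : nat) (alpha : R) : Prop :=
  0 < alpha /\
  forall (a : nat -> nat) (len : option nat),
    is_cf_expansion alpha a len ->
    forall k m : nat, semiconv_index a len k m ->
      (k, m) <> (0%nat, 0%nat) ->
      ~ Nat.divide n (semiconv_den a k m).

(* Main.v *)
Require Import Defs.
From Stdlib Require Import Reals ZArith Lia Lra Psatz Classical Arith Wf_nat.
Open Scope R_scope.

Definition qq2 (a : nat -> nat) (j : nat) : nat :=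
  match j with O => 1%nat | S j' => cf_qprev a j' end.
Definition pprev (a : nat -> nat) (j : nat) : nat := fst (cf_ppair a j).
Definition pp2 (a : nat -> nat) (j : nat) : nat :=
  match j with O => 0%nat | S j' => pprev a j' end.

Lemma cf_q_rec a j : cf_q a j = (a j * cf_qprev a j + qq2 a j)%nat.
Proof.
  destruct j as [|j]; unfold cf_q, cf_qprev, qq2; simpl; [lia|].
  unfold cf_qprev. destruct (cf_qpair a j) as [x y]; simpl. lia.
Qed.

Lemma cf_qprev_S a j : cf_qprev a (S j) = cf_q a j.
Proof. unfold cf_q, cf_qprev; simpl. destruct (cf_qpair a j); reflexivity. Qed.

Lemma cf_p_rec a j : cf_p a j = (a j * pprev a j + pp2 a j)%nat.
Proof.
  destruct j as [|j]; unfold cf_p, pprev, pp2; simpl; [lia|].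
  unfold pprev. destruct (cf_ppair a j) as [x y]; simpl. lia.
Qed.

Lemma pprev_S a j : pprev a (S j) = cf_p a j.
Proof. unfold cf_p, pprev; simpl. destruct (cf_ppair a j); reflexivity. Qed.

Lemma cf_det a j :
  (cf_p a j * cf_qprev a j + 1 = pprev a j * cf_q a j)%nat \/
  (pprev a j * cf_q a j + 1 = cf_p a j * cf_qprev a j)%nat.
Proof.
  induction j as [|j IH].
  - left. unfold cf_p, cf_qprev, pprev, cf_q; simpl. lia.
  - rewrite (cf_p_rec a (S j)), (cf_q_rec a (S j)). simpl qq2; simpl pp2.
    rewrite cf_qprev_S, pprev_S.
    destruct IH as [H|H]; [right|left]; nia.
Qed.

Lemma cf_q_bound a j : (forall i, (0 < i <= j)%nat -> (0 < a i)%nat) ->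
  (1 <= cf_q a j /\ j <= cf_q a j /\ (1 <= j -> 1 <= cf_qprev a j))%nat.
Proof.
  induction j as [|j IH]; intros Ha.
  - unfold cf_q, cf_qprev; simpl. lia.
  - assert (IH' := IH (fun i Hi => Ha i ltac:(lia))).
    assert (Hj := Ha (S j) ltac:(lia)).
    rewrite cf_q_rec. simpl qq2. rewrite cf_qprev_S.
    destruct j as [|j].
    + unfold cf_q, cf_qprev in *; simpl in *. lia.
    + nia.
Qed.

Lemma cf_pair_agree a a' j : (forall i, (i <= j)%nat -> a i = a' i) ->
  cf_qpair a j = cf_qpair a' j /\ cf_ppair a j = cf_ppair a' j.
Proof.
  induction j as [|j IH]; intros H; simpl.
  - rewrite (H 0%nat); auto.
  - destruct (IH (fun i Hi => H i ltac:(lia))) as [E1 E2].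
    rewrite E1, E2, (H (S j)); auto.
Qed.

Lemma trich (A1 B1 A2 B2 : nat) :
  Z.abs (Z.of_nat (A1*B2) - Z.of_nat (A2*B1)) = 1%Z ->
  ((B1 <= A1 /\ B2 <= A2) \/ (A1 <= B1 /\ A2 <= B2) \/
   (A1 = 1 /\ B1 = 0 /\ A2 = 0 /\ B2 = 1) \/
   (A1 = 0 /\ B1 = 1 /\ A2 = 1 /\ B2 = 0))%nat.
Proof.
  intros H. rewrite !Nat2Z.inj_mul in H.
  destruct (le_lt_dec B1 A1); destruct (le_lt_dec B2 A2); try (left; lia);
  try (right; left; lia).
  -
    destruct (Nat.eq_dec B1 A1); [right; left; lia|].
    right; right; left.
    assert (A1 * B2 >= (B1 + 1) * (A2 + 1))%nat by nia. nia.
  - destruct (Nat.eq_dec B2 A2); [right; left; lia|].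
    right; right; right.
    assert (A2 * B1 >= (B2 + 1) * (A1 + 1))%nat by nia. nia.
Qed.

Definition inr (len : option nat) (j : nat) : Prop :=
  match len with None => True | Some K => (j <= K)%nat end.

Definition Good (alpha : R) (Q : nat) : Prop :=
  exists a' len', is_cf_expansion alpha a' len' /\
  exists k m, semiconv_index a' len' k m /\ (k, m) <> (0%nat, 0%nat) /\
              semiconv_den a' k m = Q.

Lemma Sem alpha a len Q j m : is_cf_expansion alpha a len -> (0 < Q)%nat ->
  inr len j -> (m <= a j)%nat -> Q = (m * cf_qprev a j + qq2 a j)%nat ->
  Good alpha Q.
Proof.
  intros HE HQ Hj Hm HQe. exists a, len. split; [exact HE|].
  destruct j as [|j].
  - exists 0%nat, 1%nat. unfold semiconv_den in *; simpl in HQe.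
    unfold cf_qprev, cf_q in *; simpl in *.
    split; [|split; [congruence|lia]].
    destruct len as [K|]; simpl in *.
    + destruct HE as [HE _]. destruct K as [|K]; [right; reflexivity|].
      left. split; [lia|]. apply HE. lia.
    + destruct HE as [HE _]. apply HE. lia.
  - exists j, m. simpl qq2 in HQe. rewrite cf_qprev_S in HQe.
    split; [|split].
    + destruct len as [K|]; simpl in *; [left; split; lia|exact Hm].
    + intros E. injection E as -> ->. unfold semiconv_den, cf_qprev, cf_q in *; simpl in *. lia.
    + unfold semiconv_den. lia.
Qed.

Lemma SemG alpha a len Q j : is_cf_expansion alpha a len -> (0 < Q)%nat ->
  inr len j -> Q = cf_qprev a j -> Good alpha Q.
Proof.
  intros HE HQ Hj HQe. destruct j as [|j].
  - unfold cf_qprev in HQe; simpl in HQe. lia.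
  - rewrite cf_qprev_S, cf_q_rec in HQe.
    apply (Sem alpha a len Q j (a j)); auto.
    destruct len; simpl in *; auto; lia.
Qed.

Lemma SemK alpha a K Q t : is_cf_expansion alpha a (Some K) -> (0 < Q)%nat ->
  Q = semiconv_den a K t -> Good alpha Q.
Proof.
  intros HE HQ HQe. exists a, (Some K). split; [exact HE|].
  exists K, t. split; [right; reflexivity|]. split; [|auto].
  intros E; injection E as -> ->. unfold semiconv_den, cf_qprev, cf_q in *; simpl in *. lia.
Qed.

Lemma agree_prev a a' K : (forall i, (i < K)%nat -> a i = a' i) ->
  cf_qprev a K = cf_qprev a' K /\ qq2 a K = qq2 a' K /\
  pprev a K = pprev a' K /\ pp2 a K = pp2 a' K.
Proof.
  intros H. destruct K as [|K].
  - unfold cf_qprev, pprev; simpl. auto.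
  - destruct (cf_pair_agree a a' K (fun i Hi => H i ltac:(lia))) as [E1 E2].
    rewrite !cf_qprev_S, !pprev_S. simpl qq2; simpl pp2.
    unfold cf_q, cf_qprev, cf_p, pprev. rewrite E1, E2. auto.
Qed.

Lemma Alt alpha a K Q t : is_cf_expansion alpha a (Some K) ->
  ((1 <= K)%nat -> (2 <= a K)%nat) -> (1 <= a K)%nat ->
  (Q + cf_qprev a K = (t + 1) * cf_q a K)%nat -> (0 < Q)%nat -> Good alpha Q.
Proof.
  intros HE HK2 HK1 HQe HQ.
  set (a' := fun i => if Nat.eqb i K then (a K - 1)%nat
                      else if Nat.eqb i (S K) then 1%nat else a i).
  assert (Hag : forall i, (i < K)%nat -> a i = a' i).
  { intros i Hi. unfold a'. destruct (Nat.eqb_spec i K); [lia|].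
    destruct (Nat.eqb_spec i (S K)); [lia|reflexivity]. }
  destruct (agree_prev a a' K Hag) as [E1 [E2 [E3 E4]]].
  assert (HaK : a' K = (a K - 1)%nat) by (unfold a'; rewrite Nat.eqb_refl; reflexivity).
  assert (HaSK : a' (S K) = 1%nat).
  { unfold a'. destruct (Nat.eqb_spec (S K) K); [lia|]. rewrite Nat.eqb_refl. reflexivity. }
  assert (Hq' : cf_q a' K = ((a K - 1) * cf_qprev a K + qq2 a K)%nat).
  { rewrite cf_q_rec, HaK, E1, E2. reflexivity. }
  assert (Hp' : cf_p a' K = ((a K - 1) * pprev a K + pp2 a K)%nat).
  { rewrite cf_p_rec, HaK, E3, E4. reflexivity. }
  assert (HqS : cf_q a' (S K) = cf_q a K).
  { rewrite (cf_q_rec a' (S K)), HaSK, cf_qprev_S. simpl qq2.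
    rewrite Hq', <- E1, (cf_q_rec a K). nia. }
  assert (HpS : cf_p a' (S K) = cf_p a K).
  { rewrite (cf_p_rec a' (S K)), HaSK, pprev_S. simpl pp2.
    rewrite Hp', <- E3, (cf_p_rec a K). nia. }
  exists a', (Some (S K)). split.
  - destruct HE as [HEp HEc]. split.
    + intros i Hi. unfold a'. destruct (Nat.eqb_spec i K).
      * subst. assert (2 <= a K)%nat by (apply HK2; lia). lia.
      * destruct (Nat.eqb_spec i (S K)); [lia|]. apply HEp. lia.
    + unfold cf_conv in *. rewrite HqS, HpS. exact HEc.
  - exists (S K), t. split; [right; reflexivity|]. split; [congruence|].
    unfold semiconv_den. rewrite HqS, cf_qprev_S, Hq'.
    rewrite (cf_q_rec a K) in HQe |- *.
    destruct (a K) as [|k]; [lia|]. replace (S k - 1)%nat with k by lia. nia.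
Qed.

Definition FD (alpha : R) (a : nat -> nat) (len : option nat) (x : nat -> R) : Prop :=
  x 0%nat = alpha /\
  (forall j, inr len j -> INR (a j) <= x j < INR (a j) + 1) /\
  (forall j, inr len (S j) -> INR (a j) < x j /\ x (S j) = / (x j - INR (a j))) /\
  (forall K, len = Some K -> x K = INR (a K)).

Lemma FD_gt1 alpha a len x j : FD alpha a len x -> inr len (S j) -> 1 < x (S j).
Proof.
  intros [_ [H1 [H2 _]]] Hj. destruct (H2 j Hj) as [Ha Hx].
  assert (Hj' : inr len j) by (destruct len; simpl in *; auto; lia).
  destruct (H1 j Hj'). rewrite Hx.
  rewrite <- Rinv_1. apply Rinv_lt_contravar; lra.
Qed.

Lemma FD_int alpha a len x j : FD alpha a len x -> inr len j -> x j = INR (a j) ->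
  len = Some j.
Proof.
  intros [_ [_ [H2 _]]] Hj E. destruct len as [K|]; simpl in *.
  - destruct (Nat.eq_dec j K); [subst; auto|].
    destruct (H2 j ltac:(simpl; lia)). lra.
  - destruct (H2 j I). lra.
Qed.

Lemma INR_pos_nat k : 0 < INR k -> (1 <= k)%nat.
Proof. intros H. destruct k; [simpl in H; lra|lia]. Qed.

Lemma stage alpha a len x Q (HF : FD alpha a len x)
  (HE : is_cf_expansion alpha a len) (HQ : (0 < Q)%nat) :
  forall N j m A1 B1 A2 B2,
  (2*(A1+B1+A2+B2) + (if Nat.eqb m (a j) then 1 else 0) < N)%nat ->
  inr len j -> (m <= a j)%nat ->
  Q = (A1 * cf_qprev a j + B1 * (m * cf_qprev a j + qq2 a j))%nat ->
  Z.abs (Z.of_nat (A1*B2) - Z.of_nat (A2*B1)) = 1%Z ->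
  (INR A1 - INR B1 * (x j - INR m)) * (INR A2 - INR B2 * (x j - INR m)) <= 0 ->
  Good alpha Q.
Proof.
  induction N as [|N IH]; intros j m A1 B1 A2 B2 Hmu Hj Hm HQe Hdet Hsg; [lia|].
  destruct HF as [Hx0 [H1 [H2 H3]]] eqn:HFe.
  destruct (H1 j Hj) as [Hxa Hxb].
  destruct (Nat.eq_dec m (a j)) as [Em|Nm].
  -
    subst m. rewrite Nat.eqb_refl in Hmu.
    destruct (Req_dec (x j) (INR (a j))) as [Ex|Nx].
    + pose proof (FD_int _ _ _ _ _ HF Hj Ex) as Hlen.
      rewrite Ex, Rminus_diag, !Rmult_0_r, !Rminus_0_r in Hsg.
      assert (HA : A1 = 0%nat \/ A2 = 0%nat).
      { destruct A1; [auto|]; destruct A2; [auto|].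
        exfalso. rewrite <- mult_INR in Hsg.
        assert (0 < INR (S A1 * S A2)) by (apply lt_0_INR; lia). lra. }
      destruct HA as [-> | ->].
      * assert (B1 = 1%nat).
        { simpl in Hdet. assert (A2 * B1 = 1)%nat by lia. apply Nat.eq_mul_1 in H; tauto. }
        subst B1.
        apply (Sem alpha a len Q j (a j)); auto. lia.
      * assert (A1 = 1%nat).
        { rewrite Nat.mul_0_l in Hdet. assert (A1 * B2 = 1)%nat by lia. apply Nat.eq_mul_1 in H; tauto. }
        subst A1.
        apply (SemK alpha a j Q B1); [rewrite <- Hlen; auto|auto|].
        unfold semiconv_den. rewrite cf_q_rec. lia.
    + assert (HjS : inr len (S j)).
      { destruct len as [K|]; simpl in *; auto.
        destruct (Nat.eq_dec j K); [|lia]. subst. rewrite (H3 K eq_refl) in Nx. lra. }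
      destruct (H2 j HjS) as [Hlt HxS].
      assert (Ha1 : (1 <= a (S j))%nat).
      { pose proof (FD_gt1 _ _ _ _ _ HF HjS). destruct (H1 (S j) HjS).
        apply INR_pos_nat. lra. }
      apply (IH (S j) 0%nat B1 A1 B2 A2).
      * destruct (Nat.eqb_spec 0 (a (S j))); lia.
      * exact HjS.
      * lia.
      * rewrite cf_qprev_S, cf_q_rec. simpl qq2. lia.
      * rewrite !Nat2Z.inj_mul in Hdet |- *. lia.
      * rewrite HxS. set (y := x j - INR (a j)) in *.
        assert (Hy : 0 < y) by (unfold y; lra).
        replace ((INR B1 - INR A1 * (/ y - INR 0)) * (INR B2 - INR A2 * (/ y - INR 0)))
          with (((INR A1 - INR B1 * y) * (INR A2 - INR B2 * y)) * (/ y * / y))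
          by (simpl; field; lra).
        assert (0 < / y) by (apply Rinv_0_lt_compat; lra).
        assert (0 < / y * / y) by nra. nra.
  -
    assert (Hml : (m < a j)%nat) by lia.
    destruct (Nat.eqb_spec m (a j)); [lia|].
    assert (Hy1 : 1 <= x j - INR m).
    { assert (INR (S m) <= INR (a j)) by (apply le_INR; lia). rewrite S_INR in H. lra. }
    set (y := x j - INR m) in *.
    destruct (trich A1 B1 A2 B2 Hdet) as [[L1 L2]|[[L1 L2]|[[-> [-> [-> ->]]]|[-> [-> [-> ->]]]]]].
    + assert (HB : (1 <= B1 + B2)%nat).
      { destruct B1, B2; try lia. }
      apply (IH j (S m) (A1 - B1)%nat B1 (A2 - B2)%nat B2).
      * destruct (Nat.eqb (S m) (a j)); lia.
      * exact Hj.
      * lia.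
      * rewrite HQe. nia.
      * rewrite !Nat2Z.inj_mul, !Nat2Z.inj_sub by lia. rewrite !Nat2Z.inj_mul in Hdet.
        replace ((Z.of_nat A1 - Z.of_nat B1) * Z.of_nat B2 -
                 (Z.of_nat A2 - Z.of_nat B2) * Z.of_nat B1)%Z
          with (Z.of_nat A1 * Z.of_nat B2 - Z.of_nat A2 * Z.of_nat B1)%Z by ring.
        exact Hdet.
      * rewrite !minus_INR by lia. rewrite S_INR. fold y.
        replace (x j - (INR m + 1)) with (y - 1) by (unfold y; ring).
        replace ((INR A1 - INR B1 - INR B1 * (y - 1)) * (INR A2 - INR B2 - INR B2 * (y - 1)))
          with ((INR A1 - INR B1 * y) * (INR A2 - INR B2 * y)) by ring. exact Hsg.
    + assert (F1 : INR A1 - INR B1 * y <= 0).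
      { assert (INR A1 <= INR B1) by (apply le_INR; lia).
        assert (0 <= INR B1) by apply pos_INR. nra. }
      assert (F2 : INR A2 - INR B2 * y <= 0).
      { assert (INR A2 <= INR B2) by (apply le_INR; lia).
        assert (0 <= INR B2) by apply pos_INR. nra. }
      assert (Hz : (INR A1 - INR B1 * y) * (INR A2 - INR B2 * y) = 0) by nra.
      apply Rmult_integral in Hz. destruct Hz as [Z1|Z2].
      *
        assert (HB1 : (1 <= B1)%nat).
        { destruct B1; [|lia]. simpl in Z1. assert (A1 = 0%nat) by (apply INR_eq; simpl; lra).
          subst. simpl in Hdet. lia. }
        assert (Ey : y = 1).
        { assert (INR A1 <= INR B1) by (apply le_INR; lia).
          assert (1 <= INR B1) by (apply (le_INR 1); lia). nra. }
        assert (EA : A1 = B1) by (apply INR_eq; rewrite Ey in Z1; lra). subst A1.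
        assert (B1 = 1%nat).
        { rewrite !Nat2Z.inj_mul in Hdet.
          replace (Z.of_nat B1 * Z.of_nat B2 - Z.of_nat A2 * Z.of_nat B1)%Z
            with (Z.of_nat B1 * (Z.of_nat B2 - Z.of_nat A2))%Z in Hdet by ring.
          rewrite Z.abs_mul in Hdet. rewrite (Z.abs_eq (Z.of_nat _)) in Hdet by lia.
          match type of Hdet with context [Z.abs ?t] =>
            pose proof (Z.abs_nonneg t); set (u := Z.abs t) in * end.
          assert (Hb : (1 <= Z.of_nat B1)%Z) by lia.
          destruct (Z.eq_dec u 0) as [Hu|Hu]; [rewrite Hu in Hdet; lia|].
          assert (Z.of_nat B1 <= Z.of_nat B1 * u)%Z by nia. lia. }
        subst B1.
        apply (Sem alpha a len Q j (S m)); auto. rewrite HQe. simpl. lia.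
      * assert (HB2 : (1 <= B2)%nat).
        { destruct B2; [|lia]. simpl in Z2. assert (A2 = 0%nat) by (apply INR_eq; simpl; lra).
          subst. rewrite Nat.mul_0_r in Hdet. simpl in Hdet. lia. }
        assert (Ey : y = 1).
        { assert (INR A2 <= INR B2) by (apply le_INR; lia).
          assert (1 <= INR B2) by (apply (le_INR 1); lia). nra. }
        assert (EA : A2 = B2) by (apply INR_eq; rewrite Ey in Z2; lra). subst A2.
        assert (B2 = 1%nat).
        { rewrite !Nat2Z.inj_mul in Hdet.
          replace (Z.of_nat A1 * Z.of_nat B2 - Z.of_nat B2 * Z.of_nat B1)%Z
            with (Z.of_nat B2 * (Z.of_nat A1 - Z.of_nat B1))%Z in Hdet by ring.
          rewrite Z.abs_mul in Hdet. rewrite (Z.abs_eq (Z.of_nat _)) in Hdet by lia.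
          match type of Hdet with context [Z.abs ?t] =>
            pose proof (Z.abs_nonneg t); set (u := Z.abs t) in * end.
          assert (Hb : (1 <= Z.of_nat B1)%Z) by lia.
          destruct (Z.eq_dec u 0) as [Hu|Hu]; [rewrite Hu in Hdet; lia|].
          assert (Z.of_nat B1 <= Z.of_nat B1 * u)%Z by nia. lia. }
        subst B2.
        assert (EB : B1 = S A1) by (rewrite !Nat2Z.inj_mul in Hdet; lia). subst B1.
        assert (Exj : x j = INR (a j)).
        { assert (INR (S m) <= INR (a j)) by (apply le_INR; lia). rewrite S_INR in H.
          unfold y in Ey. lra. }
        assert (Eam : a j = S m).
        { apply INR_eq. rewrite <- Exj, S_INR. unfold y in Ey. lra. }
        pose proof (FD_int _ _ _ _ _ HF Hj Exj) as Hlen. subst len.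
        apply (Alt alpha a j Q A1); auto.
        -- intros Hj1. destruct j as [|j']; [lia|].
           pose proof (FD_gt1 _ _ _ _ _ HF Hj). rewrite Exj in H.
           destruct (a (S j')) as [|[|k]]; simpl in H; try lra; lia.
        -- lia.
        -- rewrite HQe, (cf_q_rec a j), Eam. nia.
    +
      apply (SemG alpha a len Q j); auto. lia.
    + apply (Sem alpha a len Q j m); auto. lia.
Qed.

Definition fl (y : R) : Z := (up y - 1)%Z.

Lemma fl_spec y : IZR (fl y) <= y < IZR (fl y) + 1.
Proof. unfold fl. rewrite minus_IZR. destruct (archimed y). simpl. lra. Qed.

Lemma fl_nonneg y : 0 <= y -> (0 <= fl y)%Z.
Proof.
  intros H. destruct (fl_spec y). assert (-1 < IZR (fl y)) by lra.
  apply lt_IZR in H2. lia.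
Qed.

Fixpoint xs (alpha : R) (j : nat) : R :=
  match j with
  | O => alpha
  | S j => / (xs alpha j - IZR (fl (xs alpha j)))
  end.

Lemma FD_ident alpha a len x : FD alpha a len x -> forall j, inr len j ->
  alpha * (INR (cf_qprev a j) * x j + INR (qq2 a j)) =
  INR (pprev a j) * x j + INR (pp2 a j).
Proof.
  intros HF. pose proof HF as [Hx0 [H1 [H2 H3]]].
  induction j as [|j IH]; intros Hj.
  - unfold cf_qprev, pprev; simpl. rewrite Hx0. ring.
  - assert (Hj' : inr len j) by (destruct len; simpl in *; auto; lia).
    specialize (IH Hj'). destruct (H2 j Hj) as [Hlt HxS].
    rewrite cf_qprev_S, pprev_S, cf_q_rec, cf_p_rec. simpl qq2; simpl pp2.
    rewrite HxS. rewrite !plus_INR, !mult_INR.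
    set (d := x j - INR (a j)) in *.
    assert (Hd : 0 < d) by (unfold d; lra).
    assert (Ex : x j = INR (a j) + d) by (unfold d; ring).
    rewrite Ex in IH.
    transitivity (alpha * (INR (cf_qprev a j) * (INR (a j) + d) + INR (qq2 a j)) * / d).
    + field; lra.
    + rewrite IH. field; lra.
Qed.

Lemma least_ex (P : nat -> Prop) : (exists j, P j) ->
  exists K, P K /\ forall i, (i < K)%nat -> ~ P i.
Proof.
  intros [j Hj]. revert Hj. induction j as [j IH] using (well_founded_induction lt_wf).
  intros Hj. destruct (classic (exists i, (i < j)%nat /\ P i)) as [[i [Hi Pi]]|Hn].
  - exact (IH i Hi Pi).
  - exists j. split; auto. intros i Hi Pi. apply Hn. eauto.
Qed.

Lemma floor_exp alpha : 0 < alpha ->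
  exists a len x, FD alpha a len x /\ is_cf_expansion alpha a len.
Proof.
  intros Ha.
  set (x := xs alpha).
  set (a := fun j => Z.to_nat (fl (x j))).
  assert (HaI : forall j, 0 <= x j -> INR (a j) = IZR (fl (x j))).
  { intros j Hj. unfold a. rewrite INR_IZR_INZ, Z2Nat.id; auto. apply fl_nonneg; auto. }
  assert (Hb : forall j, 0 <= x j -> INR (a j) <= x j < INR (a j) + 1).
  { intros j Hj. rewrite HaI by auto. apply fl_spec. }
  set (P := fun j => x j = INR (a j)).
  assert (Hstep : forall j, 0 < x j -> ~ P j ->
             INR (a j) < x j /\ x (S j) = / (x j - INR (a j)) /\ 1 < x (S j)).
  { intros j Hj HP. destruct (Hb j ltac:(lra)) as [B1 B2].
    assert (Hlt : INR (a j) < x j) by (unfold P in HP; lra).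
    assert (E : x (S j) = / (x j - INR (a j))) by (unfold x; simpl; fold x; rewrite <- HaI by lra; reflexivity).
    split; [auto|split; [auto|]]. rewrite E. rewrite <- Rinv_1.
    apply Rinv_lt_contravar; lra. }
  assert (Main : forall len, (forall j, inr len j -> 0 < x j) ->
     (forall j, inr len (S j) -> ~ P j) ->
     (forall K, len = Some K -> P K) -> FD alpha a len x /\ is_cf_expansion alpha a len).
  { intros len Hpos HnP HPK.
    assert (HF : FD alpha a len x).
    { split; [reflexivity|]. split; [intros j Hj; apply Hb; specialize (Hpos j Hj); lra|].
      split; [|exact HPK].
      intros j Hj. assert (Hj' : inr len j) by (destruct len; simpl in *; auto; lia).
      destruct (Hstep j (Hpos j Hj') (HnP j Hj)) as [? [? _]]. auto. }
    split; [exact HF|].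
    assert (Hapos : forall i, (0 < i)%nat -> inr len i -> (0 < a i)%nat).
    { intros i Hi Hin. destruct i as [|i]; [lia|].
      pose proof (FD_gt1 _ _ _ _ _ HF Hin). destruct (Hb (S i) ltac:(lra)).
      apply INR_pos_nat. lra. }
    destruct len as [K|].
    - split.
      + intros i Hi. apply Hapos; [lia|]. simpl; lia.
      + pose proof (FD_ident _ _ _ _ HF K ltac:(simpl; lia)) as HI.
        rewrite (HPK K eq_refl) in HI. fold (P K) in HI.
        unfold cf_conv. rewrite cf_q_rec, cf_p_rec.
        assert (Hq : (1 <= cf_q a K)%nat).
        { apply cf_q_bound. intros i Hi. apply Hapos; [lia|]. simpl; lia. }
        rewrite cf_q_rec in Hq.
        assert (Hq' : 1 <= INR (a K * cf_qprev a K + qq2 a K)) by (apply (le_INR 1); lia).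
        rewrite !plus_INR, !mult_INR in *.
        replace (INR (a K) * INR (pprev a K) + INR (pp2 a K)) with
          (alpha * (INR (cf_qprev a K) * INR (a K) + INR (qq2 a K))) by (rewrite HI; ring).
        field. lra.
    - split.
      + intros i Hi. apply Hapos; auto. exact I.
      + intros eps Heps.
        destruct (archimed_cor1 eps Heps) as [N [HN HN0]].
        exists N. intros k Hk. unfold R_dist, cf_conv.
        pose proof (FD_ident _ _ _ _ HF (S k) I) as HI.
        rewrite cf_qprev_S, pprev_S in HI. simpl qq2 in HI; simpl pp2 in HI.
        assert (HX := FD_gt1 _ _ _ _ k HF I).
        destruct (cf_q_bound a k (fun i Hi => Hapos i ltac:(lia) I)) as [Hq1 [Hqk _]].
        assert (Hdet := cf_det a k).
        set (X := x (S k)) in *.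
        assert (Q1 : 1 <= INR (cf_q a k)) by (apply (le_INR 1); lia).
        assert (QK : INR N <= INR (cf_q a k)) by (apply le_INR; lia).
        assert (HN1 : 0 < INR N) by (apply lt_0_INR; lia).
        assert (Qp : 0 <= INR (cf_qprev a k)) by apply pos_INR.
        set (q := INR (cf_q a k)) in *. set (qp := INR (cf_qprev a k)) in *.
        set (p := INR (cf_p a k)) in *. set (pp := INR (pprev a k)) in *.
        assert (HD : 0 < q * X + qp) by nra.
        assert (Ealpha : alpha = (p * X + pp) / (q * X + qp)).
        { rewrite <- HI. field. lra. }
        assert (Hd : p * qp + 1 = pp * q \/ pp * q + 1 = p * qp).
        { destruct Hdet as [E|E]; [left|right]; apply (f_equal INR) in E;
          rewrite !plus_INR, !mult_INR in E; exact E. }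
        assert (Ediff : p / q - alpha = (p * qp - pp * q) / (q * (q * X + qp))).
        { rewrite Ealpha. field. lra. }
        rewrite Ediff.
        assert (Hbig : q <= q * (q * X + qp)) by nra.
        assert (Habs : Rabs (p * qp - pp * q) = 1).
        { destruct Hd as [E|E]; [replace (p*qp - pp*q) with (-1) by lra|
                                 replace (p*qp - pp*q) with 1 by lra];
          unfold Rabs; destruct Rcase_abs; lra. }
        unfold Rdiv. rewrite Rabs_mult, Habs, Rmult_1_l.
        rewrite Rabs_inv, Rabs_right by nra.
        apply Rle_lt_trans with (/ INR N); [|exact HN].
        apply Rinv_le_contravar; [lra|]. lra. }
  destruct (classic (exists j, P j)) as [Hex|Hnex].
  - destruct (least_ex P Hex) as [K [HPK HK]].
    assert (Hpos : forall j, (j <= K)%nat -> 0 < x j).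
    { induction j as [|j IH]; intros Hj.
      - unfold x; simpl; auto.
      - destruct (Hstep j (IH ltac:(lia)) (HK j ltac:(lia))) as [_ [_ ?]]. lra. }
    exists a, (Some K), x. apply Main.
    + intros j Hj. apply Hpos. exact Hj.
    + intros j Hj. apply HK. simpl in Hj. lia.
    + intros K' E. injection E as <-. exact HPK.
  - assert (Hpos : forall j, 0 < x j).
    { induction j as [|j IH].
      - unfold x; simpl; auto.
      - assert (~ P j) by (intro; apply Hnex; eauto).
        destruct (Hstep j IH H) as [_ [_ ?]]. lra. }
    exists a, None, x. apply Main.
    + intros j _. apply Hpos.
    + intros j _ HPj. apply Hnex. eauto.
    + intros K E; discriminate.
Qed.

Theorem mainTheorem9 (n a b c d : nat)
  (ha : (0 < a)%nat) (hb : (0 < b)%nat) (hc : (0 < c)%nat)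
  (hd : (0 < d)%nat) (hn : (0 < n)%nat)
  (hdet : Z.abs (Z.of_nat (a * d) - Z.of_nat (b * c * n)) = 1%Z)
  (alpha : R) :
  Rmin (INR a / INR (c * n)) (INR b / INR d) <= alpha <=
  Rmax (INR a / INR (c * n)) (INR b / INR d) ->
  ~ infinite_loop_mod n alpha.
Proof.
  intros Hint [Hpos Hall].
  destruct (floor_exp alpha Hpos) as [e [len [x [HF HE]]]].
  assert (HG : Good alpha (c * n)).
  { assert (Hx0 : x 0%nat = alpha) by (destruct HF; auto).
    apply (stage alpha e len x (c * n) HF HE ltac:(nia)
             (S (2 * (a + c * n + b + d) + 1)) 0%nat 0%nat a (c * n) b d).
    - destruct (Nat.eqb 0 (e 0%nat)); lia.
    - destruct len; simpl; auto; lia.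
    - lia.
    - unfold cf_qprev; simpl. lia.
    - rewrite Nat.mul_assoc. exact hdet.
    - rewrite Hx0. simpl INR at 2 4. rewrite !Rminus_0_r.
      assert (Hcn : 0 < INR (c * n)) by (apply lt_0_INR; nia).
      assert (Hd : 0 < INR d) by (apply lt_0_INR; lia).
      set (u := INR a / INR (c * n)) in *. set (v := INR b / INR d) in *.
      assert (Eu : INR a = INR (c * n) * u) by (unfold u; field; lra).
      assert (Ev : INR b = INR d * v) by (unfold v; field; lra).
      rewrite Eu, Ev.
      assert (Huv : (u - alpha) * (v - alpha) <= 0).
      { unfold Rmin, Rmax in Hint. destruct (Rle_dec u v); nra. }
      replace ((INR (c * n) * u - INR (c * n) * alpha) * (INR d * v - INR d * alpha))
        with ((INR (c * n) * INR d) * ((u - alpha) * (v - alpha))) by ring.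
      assert (0 < INR (c * n) * INR d) by nra. nra. }
  destruct HG as [e' [len' [HE' [k [m [Hidx [Hne Hden]]]]]]].
  apply (Hall e' len' HE' k m Hidx Hne).
  rewrite Hden. exists c. lia.
Qed.
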